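(* Let $q>0$, and let $\mathbf m$, $\mathbf n$ be proper paths for $q$ with $c(q,\mathbf m)=c(q,\mathbf n)$. Then there is a proper loop $\mathbf u$ for $q$ such that $\mathbf m=(\mathbf u\mathbf n)^*$. Moreover, $\mathbf u$ is different from the trivial loop $(0)$ if and only if $\mathbf m\ne\mathbf n$.
   Context: Let $q>0$. For $k\ge0$ and $\mathbf m=(m_0,\dots,m_k)\in\mathbb Z^{k+1}$ put $\mathbf m_j=(m_0,\dots,m_j)$; define $c(q,\mathbf m_0)=m_0$ and $c(q,\mathbf m_j)=m_j+\frac{1}{q\,c(q,\mathbf m_{j-1})}$ for $1\le j\le k$. $\mathbf m$ is a path for $q$ of length $k$ if $c(q,\mathbf m_j)\ne0$ for $0\le j\le k-1$; it is proper if $m_j\ne0$ for $0\le j\le k-1$. A loop is a path with $c(q,\mathbf m)=0$; $(0)$ is the trivial loop. The composition of $\mathbf u=(u_0,\dots,u_k)$ and $\mathbf n=(n_0,\dots,n_\ell)$ is $\mathbf u\mathbf n=(u_0,\dots,u_{k-1},u_k+n_0,n_1,\dots,n_\ell)$. Zero-skipping: for a path with an entry $m_j=0$, $1\le j\le k-1$, replace $(\dots,m_{j-1},0,m_{j+1},\dots)$ by $(\dots,m_{j-1}+m_{j+1},\dots)$ (this does not change $c(q,\cdot)$); repeating this until no such interior zero remains gives a proper path denoted $\mathbf m^*$. *)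

(* Defs.v *)
From HB Require Import structures.
From mathcomp Require Import all_boot all_order all_algebra.
Set Implicit Arguments. Unset Strict Implicit. Unset Printing Implicit Defensive.
Import Order.TTheory GRing.Theory Num.Theory.
Local Open Scope ring_scope.

(* A tuple m = (m_0,...,m_k) is a nonempty sequence of integers; k = size m - 1. *)

(* c(q, m) : c(q,m_0) = m_0, c(q,m_j) = m_j + 1/(q c(q,m_{j-1})). *)
Definition cval (R : realFieldType) (q : R) (m : seq int) : R :=
  match m with
  | [::] => 0
  | m0 :: t => foldl (fun c mj => mj%:~R + (q * c)^-1) (m0%:~R) t
  end.

Definition is_path (R : realFieldType) (q : R) (m : seq int) : Prop :=
  (0 < size m)%N /\
  forall j : nat, (j < (size m).-1)%N -> cval q (take j.+1 m) != 0.

Definition is_proper (m : seq int) : Prop :=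
  forall j : nat, (j < (size m).-1)%N -> nth 0 m j != 0.

Definition is_loop (R : realFieldType) (q : R) (m : seq int) : Prop :=
  is_path q m /\ cval q m = 0.

(* composition u n = (u_0,...,u_{k-1}, u_k + n_0, n_1, ..., n_l) *)
Definition path_comp (u n : seq int) : seq int :=
  match u, n with
  | u0 :: ut, n0 :: nt => belast u0 ut ++ (last u0 ut + n0) :: nt
  | [::], _ => n
  | _, [::] => u
  end.

(* one zero-skipping step at the first interior zero, if any:
   (..., a, 0, b, ...) -> (..., a + b, ...) *)
Fixpoint skip1 (s : seq int) : option (seq int) :=
  match s with
  | [::] => None
  | x :: t =>
      match t with
      | z :: y :: r =>
          if z == 0 then Some ((x + y) :: r) else omap (cons x) (skip1 t)
      | _ => None
      end
  end.

Fixpoint star_fuel (fuel : nat) (s : seq int) : seq int :=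
  match fuel with
  | 0 => s
  | fuel'.+1 => match skip1 s with
                | Some s' => star_fuel fuel' s'
                | None => s
                end
  end.

(* m^* : repeat zero-skipping until no interior zero remains
   (each step shortens the sequence by 2, so size s steps suffice). *)
Definition star (s : seq int) : seq int := star_fuel (size s) s.

(* Main.v *)
Require Import Defs.
From HB Require Import structures.
From mathcomp Require Import all_boot all_order all_algebra.
From mathcomp Require Import zify.
Set Implicit Arguments. Unset Strict Implicit. Unset Printing Implicit Defensive.
Import Order.TTheory GRing.Theory Num.Theory.
Local Open Scope ring_scope.

Lemma cval_rcons (R : realFieldType) (q : R) s x :
  cval q (rcons s x) = if s is [::] then x%:~R else x%:~R + (q * cval q s)^-1.
Proof. case: s => [|s0 s] //=. by rewrite foldl_rcons. Qed.

Lemma cval_rcons_ne (R : realFieldType) (q : R) s x : s != [::] ->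
  cval q (rcons s x) = x%:~R + (q * cval q s)^-1.
Proof. by rewrite cval_rcons; case: s. Qed.

Definition allpre (R : realFieldType) (q : R) (s : seq int) :=
  forall j, (j < size s)%N -> cval q (take j.+1 s) != 0.

Lemma allpre_rcons (R : realFieldType) (q : R) s x :
  allpre q (rcons s x) <-> allpre q s /\ cval q (rcons s x) != 0.
Proof.
rewrite /allpre size_rcons; split.
- move=> H; split.
  + move=> j hj. have := H j. rewrite ltnS ltnW // -cats1 takel_cat //. by apply.
  + have := H (size s) (ltnSn _). by rewrite take_oversize // size_rcons.
- move=> [H1 H2] j; rewrite ltnS leq_eqVlt => /orP [/eqP -> | hj].
  + by rewrite take_oversize ?size_rcons.
  + rewrite -cats1 takel_cat //; exact: H1.
Qed.

Lemma allpre_full (R : realFieldType) (q : R) s :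
  s != [::] -> allpre q s -> cval q s != 0.
Proof. case/lastP: s => // s x _ /allpre_rcons []. done. Qed.

Lemma is_path_rcons (R : realFieldType) (q : R) s x :
  allpre q s -> is_path q (rcons s x).
Proof.
move=> H; split; first by rewrite size_rcons.
move=> j; rewrite size_rcons /= => hj. rewrite -cats1 takel_cat //. exact: H.
Qed.

Lemma path_allpre (R : realFieldType) (q : R) s x t :
  is_path q (rcons s x ++ t) -> allpre q s.
Proof.
move=> [_ H] j hj. have := H j. rewrite cat_rcons takel_cat //. apply.
rewrite size_cat /=. lia.
Qed.

Lemma proper_rcons s x : all (fun v : int => v != 0) s -> is_proper (rcons s x).
Proof.
move=> /allP H j; rewrite size_rcons /= => hj. rewrite nth_rcons hj.
apply: H; exact: mem_nth.
Qed.

Lemma proper_cat s t : t != [::] -> is_proper (s ++ t) -> all (fun v : int => v != 0) s.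
Proof.
move=> nt H; apply/(all_nthP 0) => i hi. have := H i. rewrite nth_cat hi; apply.
move: nt; rewrite size_cat; case: (t) => //= ? ? _. rewrite addnS /=. exact: ltn_addr.
Qed.

Lemma proper_skip1 s : is_proper s -> skip1 s = None.
Proof.
elim: s => [|x t IH] //= H.
case: t IH H => [|z [|y r]] //= IH H.
have hz : z != 0 by have := H 1%N; apply => /=.
rewrite (negbTE hz). rewrite IH //.
move=> j hj. have := H j.+1. apply. move: hj => /=. lia.
Qed.

Lemma skip1_cons x t : head 1 t != 0 -> skip1 (x :: t) = omap (cons x) (skip1 t).
Proof. case: t => [|z [|y r]] // hz. by rewrite /= (negbTE hz). Qed.

Lemma skip1_mid Q z w T : all (fun v : int => v != 0) Q -> z != 0 ->
  skip1 (Q ++ z :: 0 :: w :: T) = Some (Q ++ (z + w) :: T).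
Proof.
elim: Q => [|q0 Q IH] hQ hz; first by rewrite /= ?eqxx.
case/andP: hQ => h0 hQ. rewrite cat_cons skip1_cons ?IH //.
by case: Q {IH} hQ => //= ? ? /andP[].
Qed.

Lemma star_fuel_some f s s' : skip1 s = Some s' -> star_fuel f.+1 s = star_fuel f s'.
Proof. by move=> /= ->. Qed.

Lemma star_fuel_none f s : skip1 s = None -> star_fuel f s = s.
Proof. by case: f => //= f ->. Qed.

Lemma star_mid C P x y T f : all (fun v : int => v != 0) P -> x != 0 ->
  all (fun v : int => v != 0) C -> (size C < f)%N ->
  star_fuel f (P ++ x :: rev (map (fun v : int => - v) C) ++ 0 :: C ++ y :: T) =
  star_fuel (f - (size C).+1) (P ++ (x + y) :: T).
Proof.
elim: C f P x => [|c C IH] f P x hP hx hC hf.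
- case: f hf => // f _. rewrite (star_fuel_some f (skip1_mid _ _ hP hx)).
  by rewrite subSS subn0.
- case: f hf => // f hf. move: hC => /andP[hc hC].
  rewrite map_cons rev_cons cat_rcons.
  set Rr := rev _.
  have -> : P ++ x :: (Rr ++ - c :: 0 :: (c :: C) ++ y :: T) =
            (P ++ x :: Rr) ++ - c :: 0 :: c :: (C ++ y :: T) by rewrite -catA.
  have hQ : all (fun v : int => v != 0) (P ++ x :: Rr).
    rewrite all_cat hP /= hx /Rr all_rev all_map.
    apply/allP => v hv /=; rewrite oppr_eq0; exact: (allP hC).
  rewrite (star_fuel_some f (skip1_mid _ _ hQ _)); last by rewrite oppr_eq0.
  rewrite addNr -catA /= IH //. 
Qed.

Lemma revloop (R : realFieldType) (q : R) (hq : q != 0) B : B != [::] -> allpre q B ->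
  forall P, P != [::] -> allpre q P ->
  cval q P = (q * cval q B)^-1 -> is_loop q (P ++ rev (map (fun v : int => - v) B)).
Proof.
elim/last_ind: B => [//|B c IH] _ hB P hP hPa hcP.
rewrite map_rcons rev_rcons -cat_rcons.
have hc1 : cval q (rcons P (- c)) = cval q (rcons B c) - c%:~R.
  case: P hP hPa hcP => // p P _ _ hcP.
  rewrite cval_rcons hcP invfM invrK mulrA mulVf // mul1r intrN addrC //.
move/allpre_rcons: (hB) => [hB' hcB].
case: (eqVneq B [::]) => [E|nB].
- subst B. rewrite cats0; split; first exact: is_path_rcons.
  by rewrite hc1 /= subrr.
- have hB0 := allpre_full nB hB'.
  apply: IH => //.
  + by case: (P) hP.
  + apply/allpre_rcons; split => //.
    by rewrite hc1 cval_rcons_ne // addrC addKr invr_eq0 mulf_neq0.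
  + by rewrite hc1 cval_rcons_ne // addrC addKr.
Qed.

Lemma decomp (R : realFieldType) (q : R) (hq : q != 0) m : forall n,
  m != [::] -> n != [::] -> cval q m = cval q n ->
  exists A a B b S, [/\ m = rcons A a ++ S, n = rcons B b ++ S,
    cval q (rcons A a) = cval q (rcons B b) & (B = [::] \/ A = [::] \/ a != b)].
Proof.
elim/last_ind: m => [//|A a IH] n _.
case/lastP: n => [//|B b] _ heq.
case: (eqVneq B [::]) => [EB|hB].
  by subst B; exists A, a, [::], b, [::]; rewrite !cats0; split => //; left.
case: (eqVneq A [::]) => [EA|hA].
  by subst A; exists [::], a, B, b, [::]; rewrite !cats0; split => //; right; left.
case: (eqVneq a b) => [eab|nab]; last first.
  by exists A, a, B, b, [::]; rewrite !cats0; split => //; right; right.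
subst b. have hAB : cval q A = cval q B.
  move: heq; rewrite !cval_rcons. case: A hA {IH} => // a0 A _; case: B hB => // b0 B _.
  by move/addrI/invr_inj/(mulfI hq).
have [A1 [a1 [B1 [b1 [S1 [-> -> hc hor]]]]]] := IH B hA hB hAB.
by exists A1, a1, B1, b1, (rcons S1 a); rewrite !rcons_cat.
Qed.

Lemma path_comp_rcons s x y t : path_comp (rcons s x) (y :: t) = s ++ (x + y) :: t.
Proof. case: s => [|s0 s] //=. by rewrite belast_rcons last_rcons. Qed.

Lemma catsI (s1 s2 s : seq int) : s1 ++ s = s2 ++ s -> s1 = s2.
Proof.
elim/last_ind: s => [|s x IH]; first by rewrite !cats0.
by rewrite -!rcons_cat => /rcons_inj [] /IH.
Qed.

Theorem lemma3 (R : realFieldType) (q : R) (m n : seq int) :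
  0 < q ->
  is_path q m -> is_proper m ->
  is_path q n -> is_proper n ->
  cval q m = cval q n ->
  exists u : seq int,
    is_loop q u /\ is_proper u /\
    m = star (path_comp u n) /\
    (u <> [:: 0] <-> m <> n).
Proof.
move=> hq0 hmP hmpr hnP hnpr heq.
have hq : q != 0 by rewrite gt_eqF.
have hm0 : m != [::] by case: hmP; case: (m).
have hn0 : n != [::] by case: hnP; case: (n).
have [A [a [B [b [S [hm hn hc hor]]]]]] := decomp hq hm0 hn0 heq.
have hmP' := hmP; rewrite hm in hmP'.
have hnP' := hnP; rewrite hn in hnP'.
have hmpr' := hmpr; rewrite hm cat_rcons in hmpr'.
have hnpr' := hnpr; rewrite hn cat_rcons in hnpr'.
have hAnz := proper_cat (isT : a :: S != [::]) hmpr'.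
have hBnz := proper_cat (isT : b :: S != [::]) hnpr'.
have hstar : star m = m by rewrite /star star_fuel_none // proper_skip1.
case: (eqVneq B [::]) => [EB|nB].
- subst B. exists (rcons A (a - b)); split; [|split; [|split]].
  + split; first exact: is_path_rcons (path_allpre hmP').
    move: hc; rewrite !cval_rcons /=; case: (A) => [|a0 A0] hc.
      by rewrite intrB hc subrr.
    by rewrite intrB addrAC hc subrr.
  + exact: proper_rcons.
  + by rewrite hn /= path_comp_rcons subrK -cat_rcons -hm hstar.
  + split.
    * move=> hu hmn; apply: hu. move: hmn; rewrite hm hn /= => E.
      have := congr1 size E; rewrite size_cat size_rcons /=.
      case: (A) E => [|? ?] //=; last by move=> _; lia.
      by case=> -> _; rewrite subrr.
    * move=> hmn hu; apply: hmn. move: hu; case: (A) hm => [|? [|? ?]] //= -> [].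
      move/eqP; rewrite subr_eq0 => /eqP ->. by rewrite hn.
- have hinv : (q * cval q B)^-1 != 0.
    by rewrite invr_eq0 mulf_neq0 // (allpre_full nB (path_allpre hnP')).
  have hP : cval q (rcons A (a - b)) = (q * cval q B)^-1.
    move: hc; rewrite !cval_rcons; case: (B) nB => // b0 B0 _.
    case: (A) => [|a0 A0] hc; first by rewrite intrB hc addrC addKr.
    by rewrite intrB addrAC hc addrC addKr.
  have hab : a - b != 0.
    apply/eqP => h. case: hor => [B0|[A0|nab]].
    * by rewrite B0 in nB.
    * by move: hP hinv; rewrite A0 /= h => <-; rewrite eqxx.
    * by move/eqP: h; rewrite subr_eq0 (negbTE nab).
  case: B nB hn hnP' hnpr' hBnz hc hP hinv hor => // n0 B'' _ hn hnP' hnpr' hBnz hc hP hinv hor.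
  exists (A ++ (a - b) :: rev (map (fun v : int => - v) (n0 :: B''))).
  split; [|split; [|split]].
  + rewrite -cat_rcons. apply: revloop => //.
    * exact: path_allpre hnP'.
    * by case: (A).
    * apply/allpre_rcons; split; first exact: path_allpre hmP'.
      by rewrite hP.
  + rewrite map_cons rev_cons -rcons_cons -rcons_cat. apply: proper_rcons.
    rewrite all_cat hAnz /= hab all_rev all_map.
    move: hBnz => /= /andP [_ hB'']. apply/allP => v hv /=; rewrite oppr_eq0; exact: (allP hB'').
  + rewrite hn map_cons rev_cons -rcons_cons -rcons_cat cat_rcons /= path_comp_rcons addNr -catA /star.
    rewrite star_mid //.
    * rewrite subrK star_fuel_none; first by rewrite hm cat_rcons. by rewrite -cat_rcons -hm proper_skip1.
    * by move: hBnz => /= /andP [].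
    * rewrite !size_cat /= size_cat /=. lia.
  + split.
    * move=> _ hmn. move: hmn; rewrite hm hn => /catsI /rcons_inj [hA hab'].
      case: hor => [//|[A0|]]; first by move: hA; rewrite A0.
      by rewrite hab' eqxx.
    * move=> _ /(congr1 size). rewrite size_cat /= ?size_rev ?size_map /=. lia.
Qed.
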